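(* Both patterns $[12]$ and $[21]$ in $S_2$ admit bountiful width systems.
   Context: For $x=[x_1,\dots,x_N]\in S_N$ and a pattern $\sigma\in S_k$, an instance of $\sigma$ in $x$ is a tuple of positions $P=(P_1<\dots<P_k)$ with $(x_{P_1},\dots,x_{P_k})$ in the same relative order as $(\sigma(1),\dots,\sigma(k))$. A width system for $\sigma$ is a finite sequence of pairs $(a_1,b_1),\dots,(a_m,b_m)$ with $1\le a_l<b_l\le k$; it assigns to each instance $P$ the tuple $w(P)=(P_{b_1}-P_{a_1},\dots,P_{b_m}-P_{a_m})$. An instance $P$ is minimal in $x$ if $w(P)$ is lexicographically minimal among all instances of $\sigma$ in $x$; it is locally minimal if it is a minimal instance of $\sigma$ in the consecutive segment $[x_{P_1},x_{P_1+1},\dots,x_{P_k}]$. The width system is bountiful if for every $N$, every $x\in S_N$, every locally minimal instance $P$ of $\sigma$ in $x$ and every position $t$ with $P_1<t<P_k$, $t\notin\{P_1,\dots,P_k\}$, either $x_t<x_{P_j}$ for all $j$ with $P_j<t$, or $x_t>x_{P_j}$ for all $j$ with $P_j>t$. $\sigma$ admits a bountiful width system if some width system for $\sigma$ is bountiful. *)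

(* Defs.v *)
From mathcomp Require Import all_boot all_fingroup.
Set Implicit Arguments. Unset Strict Implicit. Unset Printing Implicit Defensive.

(* Conventions: positions and values are 0-indexed. A tuple of positions P = (P_1<...<P_k)
   is a function 'I_k -> 'I_N. *)

Definition incr (k N : nat) (P : 'I_k -> 'I_N) : Prop :=
  forall i j : 'I_k, i < j -> P i < P j.

Definition is_instance (k N : nat) (sigma : 'S_k) (x : 'S_N)
  (P : 'I_k -> 'I_N) : Prop :=
  incr P /\ forall i j : 'I_k, (x (P i) < x (P j)) = (sigma i < sigma j).

Definition width_system (k : nat) (ws : seq ('I_k * 'I_k)) : Prop :=
  forall p, p \in ws -> p.1 < p.2.

Definition width (k N : nat) (ws : seq ('I_k * 'I_k)) (P : 'I_k -> 'I_N)
  : seq nat := [seq P p.2 - P p.1 | p <- ws].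

Fixpoint lexle (s t : seq nat) : bool :=
  match s, t with
  | [::], _ => true
  | _ :: _, [::] => false
  | a :: s', b :: t' => (a < b) || ((a == b) && lexle s' t')
  end.

Definition minimal_in_window (k N : nat) (sigma : 'S_k) (ws : seq ('I_k * 'I_k))
  (x : 'S_N) (lo hi : nat) (P : 'I_k -> 'I_N) : Prop :=
  is_instance sigma x P /\
  forall Q : 'I_k -> 'I_N, is_instance sigma x Q ->
    (forall i, lo <= Q i <= hi) -> lexle (width ws P) (width ws Q).

Definition minimal_instance (k N : nat) (sigma : 'S_k) (ws : seq ('I_k * 'I_k))
  (x : 'S_N) (P : 'I_k -> 'I_N) : Prop :=
  minimal_in_window sigma ws x 0 N P.

(* Locally minimal: minimal instance in the consecutive segment
   x_{P_1}, ..., x_{P_k}.  Widths are differences of positions, hence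
   invariant under the shift re-indexing of the segment, so this is
   minimality among instances of x lying in positions [P_1, P_k]. *)
Definition locally_minimal (k N : nat) (sigma : 'S_k) (ws : seq ('I_k * 'I_k))
  (x : 'S_N) (P : 'I_k -> 'I_N) : Prop :=
  is_instance sigma x P /\
  forall (i j : 'I_k), (forall l, P i <= P l) -> (forall l, P l <= P j) ->
    minimal_in_window sigma ws x (P i) (P j) P.

Definition bountiful (k : nat) (sigma : 'S_k) (ws : seq ('I_k * 'I_k)) : Prop :=
  forall (N : nat) (x : 'S_N) (P : 'I_k -> 'I_N),
    locally_minimal sigma ws x P ->
    forall t : 'I_N,
      (exists i j : 'I_k, P i < t < P j) ->   (* P_1 < t < P_k *)
      (forall j : 'I_k, P j != t) ->
      (forall j : 'I_k, P j < t -> x t < x (P j)) \/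
      (forall j : 'I_k, t < P j -> x (P j) < x t).

Definition admits_bountiful (k : nat) (sigma : 'S_k) : Prop :=
  exists ws : seq ('I_k * 'I_k), width_system ws /\ bountiful sigma ws.

(* Main.v *)
Require Import Defs.
From mathcomp Require Import all_boot all_fingroup.

Lemma I2_cases (l : 'I_2) : l = ord0 \/ l = ord_max.
Proof.
case: l => [[|[|m]]] Hm.
- by left; apply: val_inj.
- by right; apply: val_inj.
- by [].
Qed.

Theorem mainTheorem14 : forall sigma : 'S_2, admits_bountiful sigma.
Proof.
move=> sigma. exists [:: (ord0, ord_max)]; split.
  by move=> p; rewrite inE => /eqP ->.
move=> N x P [[inc hrel] lm] t [i [j /andP[hi hj]]] hneq.
have hab : P ord0 < P ord_max by apply: inc.
have lo : forall l, P ord0 <= P l.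
  by move=> l; case: (I2_cases l) => ->; [exact: leqnn | exact: ltnW].
have up : forall l, P l <= P ord_max.
  by move=> l; case: (I2_cases l) => ->; [exact: ltnW | exact: leqnn].
have hat : P ord0 < t by apply: leq_ltn_trans (lo i) hi.
have htb : t < P ord_max by apply: leq_trans hj (up j).
have hl : forall l, P l < t -> l = ord0.
  move=> l; case: (I2_cases l) => -> // h.
  by move: (ltn_trans h htb); rewrite ltnn.
have hr : forall l, t < P l -> l = ord_max.
  move=> l; case: (I2_cases l) => -> // h.
  by move: (ltn_trans h hat); rewrite ltnn.
case: (ltnP (x t) (x (P ord0))) => h1.
  by left => l /hl ->.
case: (ltnP (x (P ord_max)) (x t)) => h2.
  by right => l /hr ->.
exfalso.
have hne : x t != x (P ord0).
  apply/negP => /eqP/perm_inj/eqP; by rewrite eq_sym (negbTE (hneq ord0)).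
have h1' : x (P ord0) < x t by rewrite ltn_neqAle eq_sym hne h1.
have hs : sigma ord0 < sigma ord_max.
  by rewrite -hrel; apply: leq_trans h1' h2.
set Q := fun l : 'I_2 => if l == ord0 then P ord0 else t.
have iQ : is_instance sigma x Q.
  split.
    move=> a b; case: (I2_cases a) => ->; case: (I2_cases b) => -> //.
  move=> a b; case: (I2_cases a) => ->; case: (I2_cases b) => ->;
    rewrite /Q /= ?ltnn //.
  - by rewrite h1' hs.
  - rewrite ltnNge (ltnW h1') /=.
    by apply/esym/negbTE; rewrite -leqNgt (ltnW hs).
have := (lm ord0 ord_max lo up).2 Q iQ.
have wQ : forall l, P ord0 <= Q l <= P ord_max.
  move=> l; rewrite /Q; case: (l == ord0).
    by rewrite leqnn (ltnW hab).
  by rewrite (ltnW hat) (ltnW htb).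
move=> /(_ wQ) /=.
rewrite /Q /=.
have -> : (P ord_max - P ord0 < t - P ord0) = false.
  apply/negbTE; by rewrite -leqNgt leq_sub2r // (ltnW htb).
have -> : (P ord_max - P ord0 == t - P ord0) = false.
  apply/negbTE/eqP => /(f_equal (addn^~ (P ord0))).
  rewrite !subnK ?(ltnW hat) ?(ltnW hab) // => E; by move: htb; rewrite E ltnn.
by [].
Qed.
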